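(* Let $K_t(\omega)$ be a weighted complete graph on $[t]$. Suppose $K_t(\omega)$ contains $\ell_1$ copies of $C_8$, $\ell_2$ copies of $K_5$, $\ell_3$ copies of $C_5$, $\ell_4$ copies of $K_4$, $\ell_5$ copies of $C_4$, $\ell_6$ copies of $K_3$ and $\ell_7$ single edges, such that all these subgraphs are pairwise vertex-disjoint and each of them is half (every edge of each of these subgraphs has weight $\frac12$). Then $$2g(K_t(\omega))\le 1-\frac{30}{30t-120\ell_1-100\ell_2-75\ell_3-72\ell_4-60\ell_5-45\ell_6-20\ell_7}.$$
   Context: A weighted complete graph $K_t(\omega)$ is the complete graph on vertex set $[t]$ in which every edge $ij$ has a weight $\omega(i,j)\in\{\frac12,1\}$; an edge is called half if its weight is $\frac12$ and full if its weight is $1$, and a subgraph is half if all its edges are half. Its edge density is $g(K_t(\omega))=\max_{\mathbf u}\sum_{1\le i<j\le t}\omega(i,j)u_iu_j$, the maximum taken over all $\mathbf u=(u_1,\dots,u_t)$ with $u_i\ge 0$ and $\sum_i u_i=1$. *)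

(* Defs.v *)
From HB Require Import structures.
From mathcomp Require Import all_boot all_order all_algebra.
From mathcomp Require Import all_classical all_reals.
Set Implicit Arguments. Unset Strict Implicit. Unset Printing Implicit Defensive.
Import Order.TTheory GRing.Theory Num.Theory.
Local Open Scope classical_set_scope.
Local Open Scope ring_scope.

Definition weighted_complete {R : realType} (t : nat) (w : 'I_t -> 'I_t -> R) :=
  (forall i j, w i j = w j i) /\
  (forall i j, i != j -> w i j = 1/2 \/ w i j = 1).

Definition simplex {R : realType} (t : nat) : set ('I_t -> R) :=
  [set u | (forall i, 0 <= u i) /\ \sum_(i < t) u i = 1].

Definition wform {R : realType} (t : nat) (w : 'I_t -> 'I_t -> R) (u : 'I_t -> R) : R :=
  \sum_(i < t) \sum_(j < t | (i < j)%N) w i j * u i * u j.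

(* edge density g(K_t(w)) = max over the simplex (taken as a sup; the max is attained) *)
Definition edge_density {R : realType} (t : nat) (w : 'I_t -> 'I_t -> R) : R :=
  sup [set wform w u | u in @simplex R t].

(* a half copy of the cycle C_k, given by its vertices f 0, ..., f (k-1) in cyclic order *)
Definition half_cycle {R : realType} (t k : nat) (w : 'I_t -> 'I_t -> R) (f : 'I_k -> 'I_t) :=
  injective f /\ forall i : 'I_k, w (f i) (f (ordS i)) = 1/2.

(* a half copy of the complete graph K_k (k = 2 gives a single half edge) *)
Definition half_clique {R : realType} (t k : nat) (w : 'I_t -> 'I_t -> R) (f : 'I_k -> 'I_t) :=
  injective f /\ forall i j : 'I_k, i != j -> w (f i) (f j) = 1/2.

(* all vertex slots of all copies together; injectivity of the combined map
   means that all copies are pairwise vertex-disjoint *)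
Definition slots (l1 l2 l3 l4 l5 l6 l7 : nat) : Type :=
  ('I_l1 * 'I_8) + (('I_l2 * 'I_5) + (('I_l3 * 'I_5) + (('I_l4 * 'I_4) +
  (('I_l5 * 'I_4) + (('I_l6 * 'I_3) + ('I_l7 * 'I_2)))))).

Definition packing_map (t l1 l2 l3 l4 l5 l6 l7 : nat)
  (c1 : 'I_l1 -> 'I_8 -> 'I_t) (c2 : 'I_l2 -> 'I_5 -> 'I_t)
  (c3 : 'I_l3 -> 'I_5 -> 'I_t) (c4 : 'I_l4 -> 'I_4 -> 'I_t)
  (c5 : 'I_l5 -> 'I_4 -> 'I_t) (c6 : 'I_l6 -> 'I_3 -> 'I_t)
  (c7 : 'I_l7 -> 'I_2 -> 'I_t) (x : slots l1 l2 l3 l4 l5 l6 l7) : 'I_t :=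
  match x with
  | inl (a, i) => c1 a i
  | inr (inl (a, i)) => c2 a i
  | inr (inr (inl (a, i))) => c3 a i
  | inr (inr (inr (inl (a, i)))) => c4 a i
  | inr (inr (inr (inr (inl (a, i))))) => c5 a i
  | inr (inr (inr (inr (inr (inl (a, i)))))) => c6 a i
  | inr (inr (inr (inr (inr (inr (a, i)))))) => c7 a i
  end.

(* Main.v *)
Require Import Defs.
From HB Require Import structures.
From mathcomp Require Import all_boot all_order all_algebra.
From mathcomp Require Import all_classical all_reals.
From mathcomp Require Import ring lra zify.
Import Order.TTheory GRing.Theory Num.Theory.
Local Open Scope ring_scope.

Lemma sub_sum (R : realType) (I J : finType) (g : I -> J) (F : J -> R) :
  injective g -> (forall j, 0 <= F j) -> \sum_i F (g i) <= \sum_j F j.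
Proof.
move=> ig F0.
have -> : \sum_i F (g i) = \sum_(j in [set g x | x in [set: I]]) F j.
  by rewrite big_imset //=; [apply: eq_bigl => x; rewrite inE | move=> x y _ _; apply: ig].
rewrite [X in _ <= X](bigID (fun j => j \in [set g x | x in [set: I]])) /=.
by rewrite lerDl sumr_ge0.
Qed.

Definition mm {R : realType} {t : nat} (w : 'I_t -> 'I_t -> R) i j : R :=
  if i == j then 1 else 1 - w i j.
Definition NN {R : realType} {t : nat} (w : 'I_t -> 'I_t -> R) (u : 'I_t -> R) i :=
  \sum_j mm w i j * u j.
Definition EE {R : realType} {t : nat} (w : 'I_t -> 'I_t -> R) (u : 'I_t -> R) (mu : R) i :=
  u i * NN w u i - 2 * mu * u i + mu ^+ 2.

Lemma mm_ge0 (R : realType) t (w : 'I_t -> 'I_t -> R) i j :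
  weighted_complete w -> 0 <= mm w i j.
Proof.
move=> [_ Hw]; rewrite /mm; case: eqP => [//|/eqP ij].
by case: (Hw i j ij) => ->; lra.
Qed.

Lemma mm_half (R : realType) t (w : 'I_t -> 'I_t -> R) i j :
  i != j -> w i j = 1/2 -> mm w i j = 1/2.
Proof. by rewrite /mm => /negbTE -> ->; lra. Qed.

Lemma NN_ge (R : realType) t (w : 'I_t -> 'I_t -> R) (u : 'I_t -> R) i :
  weighted_complete w -> (forall j, 0 <= u j) -> u i <= NN w u i.
Proof.
move=> Hw u0; rewrite /NN (bigD1 i) //= /mm eqxx mul1r lerDl.
by apply: sumr_ge0 => j _; apply: mulr_ge0 => //; apply: mm_ge0.
Qed.

Lemma EE_ge0 (R : realType) t (w : 'I_t -> 'I_t -> R) (u : 'I_t -> R) mu i :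
  weighted_complete w -> (forall j, 0 <= u j) -> 0 <= EE w u mu i.
Proof.
move=> Hw u0; rewrite /EE.
have h := @NN_ge R t w u i Hw u0; have h2 := u0 i.
have : u i * u i <= u i * NN w u i by apply: ler_wpM2l.
have := sqr_ge0 (u i - mu); nra.
Qed.

Lemma form_id (R : realType) t (w : 'I_t -> 'I_t -> R) (u : 'I_t -> R) :
  weighted_complete w -> \sum_i u i = 1 ->
  1 - 2 * wform w u = \sum_i u i * NN w u i.
Proof.
move=> [Hs _] su.
pose A (i j : 'I_t) := if (i < j)%N then w i j * u i * u j else 0.
pose B (i j : 'I_t) := if (j < i)%N then w i j * u i * u j else 0.
have E1 : forall i j, u i * (mm w i j * u j) = u i * u j - A i j - B i j.
  move=> i j; rewrite /A /B /mm; case: (ltngtP i j) => h.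
  - have -> : (i == j) = false by apply/negbTE; rewrite -val_eqE /= neq_ltn h.
    rewrite /=; ring.
  - have -> : (i == j) = false by apply/negbTE; rewrite -val_eqE /= neq_ltn h orbT.
    rewrite /=; ring.
  - have -> : i = j by apply: val_inj.
    rewrite eqxx /=; ring.
have SA : \sum_i \sum_j A i j = wform w u.
  by rewrite /wform; apply: eq_bigr => i _; rewrite [RHS]big_mkcond.
have SB : \sum_i \sum_j B i j = wform w u.
  rewrite -SA exchange_big /=; apply: eq_bigr => i _; apply: eq_bigr => j _.
  by rewrite /A /B Hs; case: ifP => // _; ring.
have -> : \sum_i u i * NN w u i = \sum_i \sum_j (u i * u j - A i j - B i j).
  by apply: eq_bigr => i _; rewrite /NN mulr_sumr; apply: eq_bigr => j _; rewrite E1.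
have -> : \sum_i \sum_j (u i * u j - A i j - B i j)
   = \sum_i \sum_j (u i * u j) - \sum_i \sum_j A i j - \sum_i \sum_j B i j.
  rewrite -!sumrB; apply: eq_bigr => i _; by rewrite -!sumrB.
have -> : \sum_i \sum_j (u i * u j) = 1.
  by rewrite -[1 in RHS](mul1r 1) -{1}su mulr_suml; apply: eq_bigr => i _; rewrite -su mulr_sumr.
by rewrite SA SB; ring.
Qed.

Lemma ordS_neq {n} (p : 'I_n) : (1 < n)%N -> ordS p != p.
Proof.
move=> n1; rewrite -val_eqE /=; have := ltn_ord p.
case: (ltngtP p.+1 n) => h _.
- by rewrite (modn_small h); lia.
- lia.
- by rewrite h modnn; lia.
Qed.

Lemma ordSS_neq {n} (p : 'I_n) : (2 < n)%N -> ordS (ordS p) != p.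
Proof.
move=> n2; rewrite -val_eqE /=; have := ltn_ord p.
case: (ltngtP p.+1 n) => h _.
- rewrite (modn_small h); case: (ltngtP p.+2 n) => h2.
  + by rewrite (modn_small h2); lia.
  + lia.
  + by rewrite h2 modnn; lia.
- lia.
- by rewrite h modnn (modn_small (ltn_trans (ltnSn 1) n2)); lia.
Qed.

Lemma pred_neq {n} (p : 'I_n) : (1 < n)%N -> ord_pred p != p.
Proof.
move=> n1; apply/eqP => e.
by move/eqP: (ordS_neq p n1); apply; rewrite -{1}e ord_predK.
Qed.

Lemma predS_neq {n} (p : 'I_n) : (2 < n)%N -> ord_pred p != ordS p.
Proof.
move=> n2; apply/eqP => e.
move/eqP: (ordSS_neq p n2); apply; rewrite -e ord_predK //.
Qed.

Lemma tel (R : realType) k (G : 'I_k -> R) : \sum_p (G p - G (ordS p)) = 0.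
Proof.
rewrite sumrB.
by rewrite -[X in _ - X](reindex_inj (h := @ordS k) (P := xpredT) (F := G) (can_inj (@ordSK k))) subrr.
Qed.

Lemma NN_sub (R : realType) t (w : 'I_t -> 'I_t -> R) (u : 'I_t -> R) k
  (f : 'I_k -> 'I_t) i :
  weighted_complete w -> (forall j, 0 <= u j) -> injective f ->
  \sum_q mm w i (f q) * u (f q) <= NN w u i.
Proof.
move=> Hw u0 fi; rewrite /NN.
apply: (@sub_sum R _ _ f (fun j => mm w i j * u j) fi) => j.
by apply: mulr_ge0 => //; apply: mm_ge0.
Qed.

Lemma cycle_block (R : realType) t (w : 'I_t -> 'I_t -> R) (u : 'I_t -> R) mu k
  (f : 'I_k -> 'I_t) :
  weighted_complete w -> (forall j, 0 <= u j) -> (2 < k)%N -> half_cycle w f ->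
  k%:R * mu ^+ 2 / 2 <= \sum_p EE w u mu (f p).
Proof.
move=> Hw u0 k2 [fi Hf].
have k1 : (1 < k)%N by apply: ltn_trans k2.
set z := fun p => u (f p).
have z0 : forall p, 0 <= z p by move=> p; apply: u0.
have mm0 : forall i j, 0 <= mm w i j by move=> i j; apply: mm_ge0.
have Nb : forall p, z p + z (ordS p) / 2 + z (ord_pred p) / 2 <= NN w u (f p).
  move=> p; apply: le_trans (@NN_sub R t w u k f (f p) Hw u0 fi).
  rewrite (bigD1 p) //= (bigD1 (ordS p)) /=; last by rewrite ordS_neq.
  rewrite (bigD1 (ord_pred p)) /=; last by rewrite pred_neq // predS_neq.
  rewrite /mm eqxx.
  have -> : (f p == f (ordS p)) = false by rewrite (inj_eq fi) eq_sym (negbTE (ordS_neq p k1)).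
  have -> : (f p == f (ord_pred p)) = false by rewrite (inj_eq fi) eq_sym (negbTE (pred_neq p k1)).
  rewrite Hf.
  have -> : w (f p) (f (ord_pred p)) = 1/2.
    by case: Hw => Hs _; rewrite Hs -{2}(ord_predK p) Hf.
  have : 0 <= \sum_(i | ((i != p) && (i != ordS p)) && (i != ord_pred p))
      mm w (f p) (f i) * u (f i).
    by apply: sumr_ge0 => i _; apply: mulr_ge0.
  rewrite /z; lra.
pose G p := (z p ^+ 2 + z p * z (ord_pred p)) / 2 - mu * z p.
have step : \sum_p EE w u mu (f p) >=
   \sum_p ((z p + z (ordS p) - mu) ^+ 2 / 2 + mu ^+ 2 / 2 + (G p - G (ordS p))).
  apply: ler_sum => p _; rewrite /EE /G ordSK -/(z p).
  have := ler_wpM2l (z0 p) (Nb p).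
  move=> h; rewrite /z /= in h *; nra.
apply: le_trans step; rewrite big_split /= tel addr0 big_split /= sumr_const card_ord.
rewrite -[X in X <= _]add0r; apply: lerD.
  by apply: sumr_ge0 => p _; apply: mulr_ge0 => //; [apply: sqr_ge0 | lra].
by rewrite -mulr_natl; lra.
Qed.

Lemma clique_block (R : realType) t (w : 'I_t -> 'I_t -> R) (u : 'I_t -> R) mu k
  (f : 'I_k -> 'I_t) :
  weighted_complete w -> (forall j, 0 <= u j) -> half_clique w f ->
  k%:R * (k%:R - 1) / (k%:R + 1) * mu ^+ 2 <= \sum_p EE w u mu (f p).
Proof.
move=> Hw u0 [fi Hf].
set z := fun p => u (f p).
set s := \sum_q z q.
have z0 : forall p, 0 <= z p by move=> p; apply: u0.
have Nb : forall p, z p / 2 + s / 2 <= NN w u (f p).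
  move=> p; apply: le_trans (@NN_sub R t w u k f (f p) Hw u0 fi).
  rewrite (bigD1 p) //= /s (bigD1 p) //= /mm eqxx.
  have -> : \sum_(i | i != p) (if f p == f i then 1 else 1 - w (f p) (f i)) * u (f i)
          = \sum_(i | i != p) (1/2) * z i.
    apply: eq_bigr => i ip; rewrite (inj_eq fi) eq_sym (negbTE ip) Hf; last by rewrite eq_sym.
    rewrite /z /=; have h2 : (1 - 1/2 : R) = 1/2 by lra.
    by rewrite h2.
  rewrite -mulr_sumr /z /=; lra.
pose K : R := k%:R.
pose al := 2 * mu / (K + 1).
have K0 : 0 <= K by rewrite /K ler0n.
have step : \sum_p EE w u mu (f p) >=
   \sum_p ((z p - al) ^+ 2 / 2 + ((s / 2 + al - 2 * mu) * z p + (mu ^+ 2 - al ^+ 2 / 2))).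
  apply: ler_sum => p _; rewrite /EE.
  have := ler_wpM2l (z0 p) (Nb p).
  move=> h; rewrite /z /= in h *; nra.
apply: le_trans step; rewrite big_split /= big_split /= -mulr_sumr -/s sumr_const card_ord.
have X0 : 0 <= \sum_p (z p - al) ^+ 2 / 2.
  by apply: sumr_ge0 => p _; apply: mulr_ge0 => //; [apply: sqr_ge0 | lra].
have key : (s / 2 + al - 2 * mu) * s + (mu ^+ 2 - al ^+ 2 / 2) *+ k
    - K * (K - 1) / (K + 1) * mu ^+ 2 = (s - 2 * K * mu / (K + 1)) ^+ 2 / 2.
  rewrite -mulr_natr -/K /al; field; lra.
have := sqr_ge0 (s - 2 * K * mu / (K + 1)).
rewrite -/K; lra.
Qed.

Lemma pair_block (R : realType) t (w : 'I_t -> 'I_t -> R) (u : 'I_t -> R) mu l k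
  (c : 'I_l -> 'I_k -> 'I_t) (d : R) :
  (forall a, d <= \sum_p EE w u mu (c a p)) ->
  l%:R * d <= \sum_(x : 'I_l * 'I_k) EE w u mu (let (a, p) := x in c a p).
Proof.
move=> H.
have -> : \sum_(x : 'I_l * 'I_k) EE w u mu (let (a, p) := x in c a p)
   = \sum_(x : 'I_l * 'I_k) EE w u mu (c x.1 x.2) by apply: eq_bigr => -[a p].
rewrite -(pair_bigA _ (fun a p => EE w u mu (c a p))) /=.
apply: le_trans (ler_sum _ (fun a _ => H a)).
by rewrite sumr_const card_ord mulr_natl.
Qed.

Lemma key_bound (R : realType) (t l1 l2 l3 l4 l5 l6 l7 : nat)
  (w : 'I_t -> 'I_t -> R) (Hw : weighted_complete w)
  (c1 : 'I_l1 -> 'I_8 -> 'I_t) (c2 : 'I_l2 -> 'I_5 -> 'I_t)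
  (c3 : 'I_l3 -> 'I_5 -> 'I_t) (c4 : 'I_l4 -> 'I_4 -> 'I_t)
  (c5 : 'I_l5 -> 'I_4 -> 'I_t) (c6 : 'I_l6 -> 'I_3 -> 'I_t)
  (c7 : 'I_l7 -> 'I_2 -> 'I_t)
  (H1 : forall a, half_cycle w (c1 a))
  (H2 : forall a, half_clique w (c2 a))
  (H3 : forall a, half_cycle w (c3 a))
  (H4 : forall a, half_clique w (c4 a))
  (H5 : forall a, half_cycle w (c5 a))
  (H6 : forall a, half_clique w (c6 a))
  (H7 : forall a, half_clique w (c7 a))
  (Hdisj : injective (packing_map c1 c2 c3 c4 c5 c6 c7))
  (u : 'I_t -> R) (Hu : simplex u) (mu : R) :
  2 * mu - mu ^+ 2 * (t%:R - (4 * l1%:R + 10/3 * l2%:R + 5/2 * l3%:R + 12/5 * l4%:R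
     + 2 * l5%:R + 3/2 * l6%:R + 2/3 * l7%:R)) <= 1 - 2 * wform w u.
Proof.
case: Hu => u0 su.
rewrite (@form_id R t w u Hw su).
have eE : \sum_i u i * NN w u i = \sum_i EE w u mu i + 2 * mu - t%:R * mu ^+ 2.
  rewrite /EE !big_split /= sumrN -mulr_sumr su sumr_const card_ord -mulr_natl.
  ring.
rewrite eE.
have HP := @sub_sum R _ _ _ (EE w u mu) Hdisj (fun i => @EE_ge0 R t w u mu i Hw u0).
have E0 : forall i, 0 <= EE w u mu i by move=> i; apply: EE_ge0.
suff : 4 * l1%:R * mu ^+ 2 + 10/3 * l2%:R * mu ^+ 2 + 5/2 * l3%:R * mu ^+ 2
     + 12/5 * l4%:R * mu ^+ 2 + 2 * l5%:R * mu ^+ 2 + 3/2 * l6%:R * mu ^+ 2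
     + 2/3 * l7%:R * mu ^+ 2 <= \sum_i EE w u mu i by lra.
apply: le_trans HP.
rewrite !big_sumType /=.
have cyc := fun k (c : 'I_k -> 'I_t) => @cycle_block R t w u mu k c Hw u0.
have cli := fun k (c : 'I_k -> 'I_t) => @clique_block R t w u mu k c Hw u0.
have b1 := @pair_block R t w u mu l1 8 c1 _ (fun a => cyc 8 _ isT (H1 a)).
have b2 := @pair_block R t w u mu l2 5 c2 _ (fun a => cli _ _ (H2 a)).
have b3 := @pair_block R t w u mu l3 5 c3 _ (fun a => cyc 5 _ isT (H3 a)).
have b4 := @pair_block R t w u mu l4 4 c4 _ (fun a => cli _ _ (H4 a)).
have b5 := @pair_block R t w u mu l5 4 c5 _ (fun a => cyc 4 _ isT (H5 a)).
have b6 := @pair_block R t w u mu l6 3 c6 _ (fun a => cli _ _ (H6 a)).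
have b7 := @pair_block R t w u mu l7 2 c7 _ (fun a => cli _ _ (H7 a)).
apply: le_trans (lerD b1 (lerD b2 (lerD b3 (lerD b4 (lerD b5 (lerD b6 b7)))))).
rewrite le_eqVlt; apply/orP; left; apply/eqP; field.
by [].
Qed.

Theorem mainTheorem7 (R : realType) (t l1 l2 l3 l4 l5 l6 l7 : nat)
  (w : 'I_t -> 'I_t -> R) (Hw : weighted_complete w)
  (c1 : 'I_l1 -> 'I_8 -> 'I_t) (c2 : 'I_l2 -> 'I_5 -> 'I_t)
  (c3 : 'I_l3 -> 'I_5 -> 'I_t) (c4 : 'I_l4 -> 'I_4 -> 'I_t)
  (c5 : 'I_l5 -> 'I_4 -> 'I_t) (c6 : 'I_l6 -> 'I_3 -> 'I_t)
  (c7 : 'I_l7 -> 'I_2 -> 'I_t)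
  (H1 : forall a, half_cycle w (c1 a))
  (H2 : forall a, half_clique w (c2 a))
  (H3 : forall a, half_cycle w (c3 a))
  (H4 : forall a, half_clique w (c4 a))
  (H5 : forall a, half_cycle w (c5 a))
  (H6 : forall a, half_clique w (c6 a))
  (H7 : forall a, half_clique w (c7 a))
  (Hdisj : injective (packing_map c1 c2 c3 c4 c5 c6 c7)) :
  2 * edge_density w <=
  1 - 30 / (30 * t%:R - 120 * l1%:R - 100 * l2%:R - 75 * l3%:R - 72 * l4%:R
            - 60 * l5%:R - 45 * l6%:R - 20 * l7%:R).
Proof.
have KB := @key_bound R t l1 l2 l3 l4 l5 l6 l7 w Hw c1 c2 c3 c4 c5 c6 c7 H1 H2 H3 H4 H5 H6 H7 Hdisj.
set Dc := t%:R - _ in KB.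
have -> : 30 * t%:R - 120 * l1%:R - 100 * l2%:R - 75 * l3%:R - 72 * l4%:R
            - 60 * l5%:R - 45 * l6%:R - 20 * l7%:R = 30 * Dc :> R.
  by rewrite /Dc; field.
set RHS := 1 - 30 / (30 * Dc).
have bnd : forall u, simplex u -> 2 * wform w u <= RHS.
  move=> u Hu; have [Dp|Dn] := ltP 0 Dc.
    have := KB u Hu (1 / Dc).
    have -> : 2 * (1 / Dc) - (1 / Dc) ^+ 2 * Dc = 30 / (30 * Dc).
      by field; rewrite gt_eqF.
    rewrite /RHS; lra.
  have := KB u Hu 0.
  have : 30 / (30 * Dc) <= 0.
    by rewrite invfM mulrA mulfV ?mul1r ?invr_le0 // pnatr_eq0.
  rewrite /RHS; lra.
have RHS0 : (t = 0)%N -> 1 <= RHS.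
  move=> t0; have : Dc <= 0.
    rewrite /Dc t0 !mulr_natr; have := ler0n R l1; have := ler0n R l2;
    have := ler0n R l3; have := ler0n R l4; have := ler0n R l5;
    have := ler0n R l6; have := ler0n R l7. lra.
  move=> Dn; have : 30 / (30 * Dc) <= 0.
    by rewrite invfM mulrA mulfV ?mul1r ?invr_le0 // pnatr_eq0.
  rewrite /RHS; lra.
have [t0|tp] := eqVneq t 0%N.
  rewrite /edge_density.
  have -> : [set wform w u | u in @simplex R t]%classic = set0.
    apply/funext => x; apply/propext; split => // -[u [_ su] _]; move: su.
    rewrite big1; first by move/eqP; rewrite eq_sym oner_eq0.
    by move=> i _; exfalso; have := ltn_ord i; move: (nat_of_ord i) => n; rewrite t0.
  have -> : sup (@set0 R) = 0 by exact: sup0.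
  have := RHS0 t0; lra.
have tR : 0 < t%:R :> R by rewrite ltr0n lt0n.
suff : edge_density w <= RHS / 2 by lra.
apply: ge_sup.
  exists (wform w (fun _ => 1 / t%:R)), (fun _ => 1 / t%:R) => //.
  split=> [i|]; first by apply: divr_ge0; rewrite ?ler0n.
  by rewrite sumr_const card_ord -[(1 / t%:R) *+ t]mulr_natl mul1r mulfV // gt_eqF.
move=> x [u Hu <-]; have := bnd u Hu; lra.
Qed.
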